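(* Let $\alpha\ge0$ and let $P=\{p_0,p_1,\dots,p_k\}\subset\mathbb R^n$ with $p_0=0$ and $\|p_i\|\le\alpha$ for all $i$. Then for every $x\in\mathrm{CH}(P)$ there exists $p_i\in P$ with $\|x-p_i\|\le\alpha/\sqrt2$.
   Context: $\mathrm{CH}(P)$ denotes the convex hull of $P$; $\|\cdot\|$ is the Euclidean norm. *)

(* Defs.v *)
From HB Require Import structures.
From mathcomp Require Import all_boot all_order all_algebra.
Set Implicit Arguments. Unset Strict Implicit. Unset Printing Implicit Defensive.
Import Order.TTheory GRing.Theory Num.Theory.
Local Open Scope ring_scope.

Definition enorm (R : rcfType) (n : nat) (v : 'rV[R]_n) : R :=
  Num.sqrt (\sum_(i < n) v 0 i ^+ 2).

Definition in_convex_hull (R : rcfType) (n k : nat)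
  (p : 'I_k.+1 -> 'rV[R]_n) (x : 'rV[R]_n) : Prop :=
  exists w : 'I_k.+1 -> R,
    (forall i, 0 <= w i) /\ \sum_(i < k.+1) w i = 1 /\
    x = \sum_(i < k.+1) w i *: p i.

(* Main.v *)
Require Import Defs.
From HB Require Import structures.
From mathcomp Require Import all_boot all_order all_algebra.
From mathcomp Require Import ring lra.
Import Order.TTheory GRing.Theory Num.Theory.
Set Implicit Arguments. Unset Strict Implicit.
Local Open Scope ring_scope.

Definition sq (R : rcfType) (n : nat) (v : 'rV[R]_n) : R :=
  \sum_(i < n) v 0 i ^+ 2.

Lemma sq_ge0 (R : rcfType) (n : nat) (v : 'rV[R]_n) : 0 <= sq v.
Proof. by apply: sumr_ge0 => i _; rewrite sqr_ge0. Qed.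

Lemma enorm_sq (R : rcfType) (n : nat) (v : 'rV[R]_n) : enorm v ^+ 2 = sq v.
Proof. by rewrite /enorm sqr_sqrtr // sq_ge0. Qed.

Lemma var_id (R : rcfType) (n k : nat) (w : 'I_k.+1 -> R)
  (p : 'I_k.+1 -> 'rV[R]_n) (x : 'rV[R]_n) :
  \sum_(i < k.+1) w i = 1 -> x = \sum_(i < k.+1) w i *: p i ->
  \sum_(i < k.+1) w i * sq (x - p i) = \sum_(i < k.+1) w i * sq (p i) - sq x.
Proof.
move=> Hw Hx.
have xj : forall j, x 0 j = \sum_(i < k.+1) w i * p i 0 j.
  by move=> j; rewrite {1}Hx summxE; apply: eq_bigr => i _; rewrite mxE.
transitivity (\sum_(j < n) (\sum_(i < k.+1) w i * p i 0 j ^+ 2 - x 0 j ^+ 2)).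
  rewrite /sq.
  under eq_bigr => i _ do rewrite big_distrr /=.
  rewrite exchange_big /=; apply: eq_bigr => j _.
  rewrite (eq_bigr (fun i => w i * p i 0 j ^+2 + (x 0 j ^+ 2 * w i
      - (x 0 j *+ 2) * (w i * p i 0 j)))); last first.
    by move=> i _; rewrite !mxE; ring.
  rewrite big_split /= sumrB -!mulr_sumr Hw -xj; ring.
rewrite sumrB /sq exchange_big /=; congr (_ - _).
by apply: eq_bigr => i _; rewrite big_distrr.
Qed.

Lemma le_div_sqrt2 (R : rcfType) (a s : R) : 0 <= a -> 0 <= s ->
  s * 2 <= a ^+ 2 -> Num.sqrt s <= a / Num.sqrt 2.
Proof.
move=> a0 s0 h.
have s2 : 0 < Num.sqrt 2 :> R by rewrite sqrtr_gt0.
rewrite ler_pdivlMr //.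
rewrite -ler_sqr ?nnegrE ?mulr_ge0 ?sqrtr_ge0 //.
by rewrite exprMn !sqr_sqrtr.
Qed.

Theorem lemma24 (R : rcfType) (n k : nat) (alpha : R)
  (p : 'I_k.+1 -> 'rV[R]_n) :
  0 <= alpha ->
  p ord0 = 0 ->
  (forall i, enorm (p i) <= alpha) ->
  forall x : 'rV[R]_n, in_convex_hull p x ->
  exists i : 'I_k.+1, enorm (x - p i) <= alpha / Num.sqrt 2.
Proof.
move=> a0 p0 hp x [w [w0 [Hw Hx]]].
have hsq : forall i, sq (p i) <= alpha ^+ 2.
  move=> i; rewrite -enorm_sq ler_sqr ?nnegrE ?sqrtr_ge0 //.
have V := var_id Hw Hx.
have hub : \sum_(i < k.+1) w i * sq (p i) <= alpha ^+ 2.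
  rewrite -[X in _ <= X]mul1r -Hw mulr_suml.
  by apply: ler_sum => i _; apply: ler_wpM2l.
case: (leP (sq x * 2) (alpha ^+ 2)) => hx.
  exists ord0; rewrite p0 subr0.
  by apply: le_div_sqrt2 => //; apply: sq_ge0.
have /existsP [i hi] : [exists i, sq (x - p i) * 2 <= alpha ^+ 2].
  apply: contraT => /existsPn hne.
  have : alpha ^+ 2 / 2 <= \sum_(i < k.+1) w i * sq (x - p i).
    rewrite -[X in X <= _]mul1r -Hw mulr_suml.
    apply: ler_sum => i _; apply: ler_wpM2l => //.
    have := hne i; rewrite -ltNge => h; apply/ltW.
    by rewrite Hw ltr_pdivrMr.
  rewrite V; lra.
exists i; apply: le_div_sqrt2 => //; apply: sq_ge0.
Qed.
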